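(* Let $m=2$ and suppose $n>2k+2$ where $0\le k\le n-1$. Let $\mathcal{C}$ be the class of all complete acyclic $k$-bounded binary CP-nets over $n$ variables, over $\mathcal{X}_{swap}$. (1) If $|F^1(x)\cap L|\le n-2-2k$ for every $x\in\mathcal{X}_{swap}$, then $\mathcal{C}$ is learnable with membership queries to a limited oracle. (2) If $|F^1(x)\cap L|\le\lfloor\frac{n-1}{2}\rfloor-k-1$ for every $x\in\mathcal{X}_{swap}$, then $\mathcal{C}$ is learnable with membership queries to a malicious oracle. In either case the worst-case number of queries is in $O(n^2\mathcal{U}_k+e_{N^*}n\log_2(n))$, which is in $O(n^22^k\log_2(n)k^{O(\log_2(k))}+e_{N^*}n\log_2(n))$, where $e_{N^*}$ is the number of edges of the target $N^*$.
   Context: Variables $V=\{v_1,\dots,v_n\}$ with binary domains. An outcome assigns a value to every variable. A complete CP-net gives each $v_i$ a parent set $Pa(v_i)\subseteq V\setminus\{v_i\}$ and, for each assignment $\gamma$ to $Pa(v_i)$, a strict order on $D_{v_i}$; parents are non-dummy. Acyclic: the parent graph (edges $(v_j,v_i)$, $v_j\in Pa(v_i)$) is acyclic; $k$-bounded: all $|Pa(v_i)|\le k$. Improving flip: changing only $v_i$ to the value preferred under the order for context $o[Pa(v_i)]$; $o'\succ o$ iff a nonempty sequence of improving flips leads from $o$ to $o'$. A swap is an ordered pair $x=(x.1,x.2)$ of outcomes differing in exactly one variable $V(x)$; $\mathcal{X}_{swap}$ contains exactly one ordering of each such pair (fixed arbitrarily); the target concept is $c^*(x)=1$ iff $x.1\succ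 x.2$ under the target $N^*$. For $x\in\mathcal{X}_{swap}$, $F^1(x)$ is the set of swaps $x'\in\mathcal{X}_{swap}$ with $V(x')=V(x)$ whose outcomes differ from those of $x$ in exactly one variable other than $V(x)$. A set $L\subseteq\mathcal{X}_{swap}$ is fixed in advance by an adversary, and is unknown to the learner. A limited oracle answers a membership query for $x\notin L$ with $c^*(x)$ and for $x\in L$ with ''I don't know''; a malicious oracle answers $c^*(x)$ for $x\notin L$ and $1-c^*(x)$ for $x\in L$; both are persistent (same answer on repeated queries). A class is learnable with membership queries to a limited (malicious) oracle if some algorithm exactly identifies every target in the class using a number of queries polynomial in $n$, the size of the target (its total number of CPT statements), and $|L|$. $\mathcal{U}_k$ is the smallest size of a set $S\subseteq\{0,1\}^{n-1}$ whose projection onto every set of $k$ coordinates contains all $2^k$ vectors. *)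

(* Defs.v *)
From mathcomp Require Import all_boot.
Set Implicit Arguments. Unset Strict Implicit. Unset Printing Implicit Defensive.

Definition outcome (n : nat) := {ffun 'I_n -> bool}.

(* A (complete, binary) CP-net: parent sets and, for each variable, the
   preferred value as a function of the outcome (required below to depend
   only on the parents, i.e. it is a CPT indexed by parent assignments). *)
Record cpnet (n : nat) := CPNet {
  pa  : {ffun 'I_n -> {set 'I_n}};
  cpt : {ffun 'I_n -> {ffun outcome n -> bool}} }.

Definition cpt_local n (N : cpnet n) : Prop :=
  forall (i : 'I_n) (o o' : outcome n),
    (forall j, j \in pa N i -> o j = o' j) -> cpt N i o = cpt N i o'.

Definition no_self_parent n (N : cpnet n) : Prop :=
  forall i : 'I_n, i \notin pa N i.

Definition nondummy n (N : cpnet n) : Prop :=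
  forall (i j : 'I_n), j \in pa N i ->
    exists o o' : outcome n,
      (forall l, l != j -> o l = o' l) /\ cpt N i o != cpt N i o'.

Definition pa_edge n (N : cpnet n) : rel 'I_n := fun j i => j \in pa N i.

Definition acyclic n (N : cpnet n) : Prop :=
  forall i : 'I_n, ~~ [exists j, pa_edge N i j && connect (pa_edge N) j i].

Definition kbounded n (k : nat) (N : cpnet n) : Prop :=
  forall i : 'I_n, #|pa N i| <= k.

Definition in_class n (k : nat) (N : cpnet n) : Prop :=
  [/\ cpt_local N, no_self_parent N, nondummy N, acyclic N & kbounded k N].

Definition edges n (N : cpnet n) : nat := \sum_(i < n) #|pa N i|.

Definition flip n (N : cpnet n) : rel (outcome n) := fun o o' =>
  [exists i : 'I_n, [&& o' i == cpt N i o, o i != o' i &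
                        [forall j : 'I_n, (j != i) ==> (o j == o' j)]]].

(* o' is preferred to o: nonempty sequence of improving flips from o to o' *)
Definition succ n (N : cpnet n) (o' o : outcome n) : bool :=
  [exists o'' : outcome n, flip N o o'' && connect (flip N) o'' o'].

Definition swap (n : nat) := (outcome n * outcome n)%type.

Definition diffset n (o o' : outcome n) : {set 'I_n} := [set j | o j != o' j].

Definition is_swap n (x : swap n) : bool := #|diffset x.1 x.2| == 1.

(* X_swap: exactly one ordering of each swap pair *)
Definition valid_Xswap n (Xs : {set swap n}) : Prop :=
  (forall x, x \in Xs -> is_swap x) /\
  (forall o1 o2 : outcome n, is_swap (o1, o2) ->
     ((o1, o2) \in Xs) != ((o2, o1) \in Xs)).

Definition cstar n (N : cpnet n) (x : swap n) : bool := succ N x.1 x.2.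

Definition F1 n (Xs : {set swap n}) (x : swap n) : {set swap n} :=
  [set x' in Xs | (diffset x'.1 x'.2 == diffset x.1 x.2) &&
     (#|[set j | (j \notin diffset x.1 x.2) && (x'.1 j != x.1 j)]| == 1)].

(* oracles (persistent: they are functions of the query) *)
Definition limited_oracle n (N : cpnet n) (L : {set swap n}) : swap n -> option bool :=
  fun x => if x \in L then None else Some (cstar N x).

Definition malicious_oracle n (N : cpnet n) (L : {set swap n}) : swap n -> bool :=
  fun x => if x \in L then ~~ cstar N x else cstar N x.

(* adaptive membership-query learners: decision trees over the answers *)
Inductive qtree (Q A : Type) :=
  | Out of (Q -> bool)
  | Ask of Q & (A -> qtree Q A).

Fixpoint run n A (Xs : {set swap n}) (orc : swap n -> A) (t : qtree (swap n) A)
  : option ((swap n -> bool) * nat) :=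
  match t with
  | Out h => Some (h, 0)
  | Ask q k => if q \in Xs then
                 match run Xs orc (k (orc q)) with
                 | Some (h, c) => Some (h, c.+1)
                 | None => None
                 end
               else None
  end.

Definition learns n A (Xs : {set swap n}) (orc : swap n -> A) (N : cpnet n)
  (t : qtree (swap n) A) (B : nat) : Prop :=
  exists h q, run Xs orc t = Some (h, q) /\
    (forall x, x \in Xs -> h x = cstar N x) /\ q <= B.

Definition universal (m k : nat) (S : {set {ffun 'I_m -> bool}}) : bool :=
  [forall K : {set 'I_m}, (#|K| == k) ==>
     [forall v : {ffun 'I_m -> bool}, [exists s in S, [forall i in K, s i == v i]]]].

Definition Uk (n k : nat) : nat :=
  #|[arg min_(S < [set: {ffun 'I_n.-1 -> bool}] | universal k S) #|S|]|.

(* Main.v *)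
Require Import Defs.
From mathcomp Require Import all_boot zify.
Set Implicit Arguments. Unset Strict Implicit. Unset Printing Implicit Defensive.

Inductive M (Q A X : Type) := Ret of X | Qry of Q & (A -> M Q A X).
Arguments Ret {Q A X}. Arguments Qry {Q A X}.

Fixpoint bindM Q A X Y (m : M Q A X) (f : X -> M Q A Y) : M Q A Y :=
  match m with Ret x => f x | Qry q k => Qry q (fun a => bindM (k a) f) end.

Fixpoint runM Q A X (orc : Q -> A) (m : M Q A X) : X * nat :=
  match m with Ret x => (x, 0) | Qry q k => let r := runM orc (k (orc q)) in (r.1, r.2.+1) end.

Fixpoint okM Q A X (P : Q -> bool) (orc : Q -> A) (m : M Q A X) : bool :=
  match m with Ret _ => true | Qry q k => P q && okM P orc (k (orc q)) end.

Lemma runM_bind Q A X Y (orc : Q -> A) (m : M Q A X) (f : X -> M Q A Y) :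
  runM orc (bindM m f) = ((runM orc (f (runM orc m).1)).1,
                          (runM orc m).2 + (runM orc (f (runM orc m).1)).2).
Proof.
elim: m => [x|q k IH] /=; first by case: (runM orc (f x)).
by rewrite IH.
Qed.

Lemma okM_bind Q A X Y P (orc : Q -> A) (m : M Q A X) (f : X -> M Q A Y) :
  okM P orc (bindM m f) = okM P orc m && okM P orc (f (runM orc m).1).
Proof. by elim: m => [x|q k IH] //=; rewrite IH andbA. Qed.

Fixpoint substM Q1 A1 Q2 A2 X (g : Q1 -> M Q2 A2 A1) (m : M Q1 A1 X) : M Q2 A2 X :=
  match m with Ret x => Ret x | Qry q k => bindM (g q) (fun a => substM g (k a)) end.

Lemma runM_subst Q1 A1 Q2 A2 X (orc1 : Q1 -> A1) (orc2 : Q2 -> A2)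
  (g : Q1 -> M Q2 A2 A1) c P (m : M Q1 A1 X) :
  (forall q, [/\ (runM orc2 (g q)).1 = orc1 q, (runM orc2 (g q)).2 <= c & okM P orc2 (g q)]) ->
  [/\ (runM orc2 (substM g m)).1 = (runM orc1 m).1,
      (runM orc2 (substM g m)).2 <= c * (runM orc1 m).2 & okM P orc2 (substM g m)].
Proof.
move=> Hg; elim: m => [x|q k IH] //=.
have [H1 H2 H3] := Hg q.
rewrite runM_bind okM_bind /= H1 H3.
have [I1 I2 I3] := IH (orc1 q).
split => //.
rewrite mulnS; exact: leq_add.
Qed.

Fixpoint toQ n A (m : M (swap n) A (swap n -> bool)) : qtree (swap n) A :=
  match m with Ret h => @Out _ _ h | Qry q k => Ask q (fun a => toQ (k a)) end.

Lemma run_toQ n A (Xs : {set swap n}) (orc : swap n -> A) m :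
  okM (fun q => q \in Xs) orc m -> run Xs orc (toQ m) = Some (runM orc m).
Proof.
elim: m => [h|q k IH] //= /andP[-> /IH ->].
by case: (runM orc (k (orc q))).
Qed.


Section Sem.
Variables (n k : nat) (N : cpnet n).
Hypothesis HN : in_class k N.

Lemma flipP (o o' : outcome n) : flip N o o' ->
  exists i, [/\ o' i = cpt N i o, o i != o' i & forall j, j != i -> o j = o' j].
Proof.
case/existsP => i /and3P[/eqP h1 h2 /forallP h3]; exists i; split => // j ji.
by apply/eqP; move: (h3 j); rewrite ji.
Qed.

Lemma loc_eq i (o o' : outcome n) : (forall j, j \in pa N i -> o j = o' j) ->
  cpt N i o = cpt N i o'.
Proof. by case: HN => Hl _ _ _ _; apply: Hl. Qed.

Definition anc (v : 'I_n) := [set u | connect (pa_edge N) u v].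

Lemma minimal_elt (F : {set 'I_n}) v0 : v0 \in F ->
  exists2 v, v \in F & forall u, u \in pa N v -> u \notin F.
Proof.
move=> v0F.
case: (arg_minnP (fun v => #|anc v|) v0F) => v vF vmin.
exists v => // u upa; apply/negP => uF.
have := vmin u uF; rewrite leqNgt => /negP; apply.
apply: proper_card; apply/properP; split.
  apply/subsetP => w; rewrite !inE => wu.
  apply: connect_trans wu _; apply: connect1; exact: upa.
exists v; first by rewrite inE connect0.
rewrite inE; apply/negP => vu.
case: HN => _ _ _ Hac _.
move/negP: (Hac u); apply; apply/existsP; exists v.
by rewrite /pa_edge upa vu.
Qed.

Lemma consistent (o o2 : outcome n) : ~~ (flip N o o2 && connect (flip N) o2 o).
Proof.
apply/negP => /andP[f1 /connectP[p pth lst]].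
set s := o2 :: p.
have pth' : path (flip N) o s by rewrite /s /= f1 pth.
have lst' : last o s = o by rewrite /s /= -lst.
set F := [set u | has (fun q : outcome n => q u != o u) s].
have [i [_ oi _]] := flipP f1.
have iF : i \in F by rewrite inE /s /= eq_sym oi.
have [v vF vmin] := minimal_elt iF.
set c := cpt N v o.
have G : forall q, q \in o :: s -> cpt N v q = c.
  move=> q qs; rewrite /c; apply: loc_eq => u upa.
  have := vmin u upa; rewrite inE => /hasPn H.
  move: qs; rewrite inE => /orP[/eqP -> //|qs].
  by move: (H q qs); rewrite negbK => /eqP.
have step : forall x y, flip N x y -> cpt N v x = c -> x v = c -> y v = c.
  move=> x y /flipP [j [h1 h2 h3]] cx xv.
  case: (eqVneq v j) => [vj | vj]; first by rewrite vj h1 -vj cx.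
  by rewrite -h3.
have L2 : forall x t, path (flip N) x t -> {subset x :: t <= o :: s} -> x v = c ->
    all (fun q : outcome n => q v == c) t.
  move=> x t; elim: t x => [|y t IH] x //= /andP[fxy pt] sub xv.
  have yv : y v = c.
    apply: step fxy _ xv; apply: G; apply: sub; exact: mem_head.
  rewrite yv eqxx /=; apply: (IH y) => //.
  by move=> q qin; apply: sub; rewrite inE qin orbT.
have L1 : forall x t, path (flip N) x t -> {subset x :: t <= o :: s} ->
    has (fun q : outcome n => q v == c) (x :: t) -> last x t v = c.
  move=> x t; elim: t x => [|y t IH] x /=; first by rewrite orbF => _ _ /eqP.
  move=> /andP[fxy pt] sub /orP[/eqP xv|hy].
    have yv : y v = c.
      apply: step fxy _ xv; apply: G; apply: sub; exact: mem_head.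
    apply: (IH y) => //; first by move=> q qin; apply: sub; rewrite inE qin orbT.
    by rewrite /= yv eqxx.
  apply: (IH y) => //; by move=> q qin; apply: sub; rewrite inE qin orbT.
move: vF; rewrite inE => /hasP[q qs qv].
case: (boolP (o v == c)) => [/eqP ov|ovn].
  have := L2 o s pth' (fun x h => h) ov.
  by move/allP/(_ q qs)/eqP => qv'; rewrite qv' ov eqxx in qv.
have : last o s v = c.
  apply: L1 => //; apply/hasP; exists q; first by rewrite inE qs orbT.
  by move: qv ovn; move: (q v) (o v) (c); do 3 case.
by rewrite lst' => ov; rewrite ov eqxx in ovn.
Qed.

Lemma cstar_swap (x1 x2 : outcome n) j :
  (forall l, l != j -> x1 l = x2 l) -> x1 j != x2 j ->
  succ N x1 x2 = (x1 j == cpt N j x2).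
Proof.
move=> agree dj.
have cj : cpt N j x1 = cpt N j x2.
  apply: loc_eq => l lpa; apply: agree; apply/eqP => lj.
  by case: HN => _ Hs _ _ _; move: lpa; rewrite lj (negbTE (Hs j)).
have fl : forall a b : outcome n, (forall l, l != j -> a l = b l) -> a j != b j ->
   b j = cpt N j a -> flip N a b.
  move=> a b ab abj bj; apply/existsP; exists j; rewrite abj bj eqxx /=.
  by apply/forallP => l; apply/implyP => lj; rewrite ab.
case: (boolP (x1 j == cpt N j x2)) => [/eqP h|h].
  apply/existsP; exists x1; rewrite connect0 andbT.
  apply: fl => //; first by move=> l lj; rewrite agree.
  by rewrite eq_sym.
apply/negbTE/negP; rewrite /succ => /existsP[o'' /andP[f1 c1]].
have f2 : flip N x1 x2.
  apply: fl => //.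
  by rewrite cj; move: h dj; case: (x1 j); case: (x2 j); case: (cpt N j x2).
have := consistent x2 o''; rewrite f1 /=.
move/negP; apply; apply: connect_trans c1 _; exact: connect1.
Qed.

End Sem.


Section Learn.
Variables (n k : nat).
Local Notation out := (outcome n).
Definition S0 : {set {ffun 'I_n.-1 -> bool}} :=
  [arg min_(S < [set: {ffun 'I_n.-1 -> bool}] | universal k S) #|S|].
Definition zP (P : {set 'I_n}) (o : out) : out := [ffun l => if l \in P then o l else false].
Definition emb (i : 'I_n) (s : {ffun 'I_n.-1 -> bool}) : out :=
  [ffun l => if unlift i l is Some l' then s l' else false].
Definition mixo (D : seq 'I_n) (a b : out) : out := [ffun l => if l \in D then b l else a l].
Definition M1 := M ('I_n * out) bool.
Fixpoint evalList i (ps : seq out) : M1 (out -> bool) :=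
  match ps with
  | [::] => Ret (fun _ => false)
  | p :: ps' => Qry (i, p) (fun v => bindM (evalList i ps')
                   (fun g => Ret (fun o => if o == p then v else g o)))
  end.
Fixpoint bsearch i fuel (a b : out) (D : seq 'I_n) (fa : bool) : M1 'I_n :=
  match fuel with
  | 0 => Ret (head i D)
  | fuel'.+1 =>
    if size D <= 1 then Ret (head i D) else
    let D1 := take (size D %/ 2) D in
    let D2 := drop (size D %/ 2) D in
    let mid := mixo D1 a b in
    Qry (i, mid) (fun v => if v != fa then bsearch i fuel' a mid D1 fa
                           else bsearch i fuel' mid b D2 v)
  end.
Definition L0 := (trunc_log 2 n).+1.
Fixpoint rounds i (t0 : out -> bool) fuel (P : {set 'I_n}) : M1 (out -> bool) :=
  match fuel with
  | 0 => Ret (fun _ => false)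
  | fuel'.+1 =>
    bindM (evalList i (enum [set zP P o | o : out])) (fun T =>
    match [pick s in S0 | t0 (emb i s) != T (zP P (emb i s))] with
    | None => Ret (fun o => T (zP P o))
    | Some s => bindM (bsearch i L0 (zP P (emb i s)) (emb i s) (enum (~: P))
                              (T (zP P (emb i s))))
                      (fun j => rounds i t0 fuel' (j |: P))
    end)
  end.
Definition learn1 i : M1 (out -> bool) :=
  bindM (evalList i [seq emb i s | s <- enum S0]) (fun t0 => rounds i t0 k.+1 set0).
Arguments learn1 : simpl never.
Fixpoint learnAll (vs : seq 'I_n) : M1 ('I_n -> out -> bool) :=
  match vs with
  | [::] => Ret (fun _ _ => false)
  | i :: vs' => bindM (learn1 i) (fun g => bindM (learnAll vs')
                  (fun G => Ret (fun j => if j == i then g else G j)))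
  end.

Variable N : cpnet n.
Hypothesis HN : in_class k N.
Definition orc1 (q : 'I_n * out) : bool := cpt N q.1 q.2.

Lemma evalList_spec i ps :
  (runM orc1 (evalList i ps)).2 = size ps /\
  forall o, o \in ps -> (runM orc1 (evalList i ps)).1 o = cpt N i o.
Proof.
elim: ps => [|p ps [IH1 IH2]] //=.
rewrite runM_bind /= addn0 IH1; split => // o.
rewrite inE; case: (eqVneq o p) => [-> //|op] /= ops.
exact: IH2.
Qed.

Lemma ar1 a b c : a <= b -> b <= c -> a + b <= 2 * c. Proof. lia. Qed.
Lemma ar2 sz bs rest q p L e : sz <= 2 ^ q -> bs <= L -> q.+1 <= p ->
  rest + 2 ^ q.+1 <= e + (p - q.+1) * L -> sz + (bs + rest) + 2 ^ q <= e + (p - q) * L.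
Proof.
move=> h1 h2 h3 h4; have -> : p - q = (p - q.+1).+1 by lia.
move: h4; rewrite mulSn expnS; lia.
Qed.
Lemma ar3 a p kk L U : 2 ^ p <= 2 ^ kk -> a + 2 ^ 0 <= 2 ^ p.+1 + p * L ->
  U + a <= U + 2 * 2 ^ kk + p * L.
Proof. rewrite expnS expn0; lia. Qed.
Lemma ar4 c1 cr A p L s S : c1 <= A + p * L -> cr <= s * A + S * L ->
  c1 + cr <= s.+1 * A + (p + S) * L.
Proof. rewrite mulSn mulnDl; lia. Qed.
Lemma half1 a b : a <= 2 * b -> a %/ 2 <= b. Proof. lia. Qed.
Lemma half2 a b : a <= 2 * b -> a - a %/ 2 <= b. Proof. lia. Qed.

Lemma bs_base i (a b : out) D :
  cpt N i a != cpt N i b -> (forall l, l \notin D -> a l = b l) -> size D <= 1 ->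
  head i D \in pa N i /\ head i D \in D.
Proof.
move=> ne ag; case: D ag => [|j [|? ?]] //= ag _.
  by move: ne; rewrite (loc_eq HN (o' := b)) ?eqxx // => l _; apply: ag.
rewrite inE eqxx; split => //.
apply/negPn/negP => jn; move/negP: ne; apply; apply/eqP.
apply: (loc_eq HN) => l lpa; apply: ag; rewrite inE; apply/eqP => lj.
by move: lpa; rewrite lj (negbTE jn).
Qed.

Lemma bsearch_spec i fuel (a b : out) D fa :
  cpt N i a = fa -> cpt N i b != fa -> (forall l, l \notin D -> a l = b l) ->
  size D <= 2 ^ fuel ->
  [/\ (runM orc1 (bsearch i fuel a b D fa)).1 \in pa N i,
      (runM orc1 (bsearch i fuel a b D fa)).1 \in D &
      (runM orc1 (bsearch i fuel a b D fa)).2 <= fuel].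
Proof.
elim: fuel a b D fa => [|fuel IH] a b D fa ea eb ag sz /=.
  by have [] := bs_base (D := D) (i := i) (a := a) (b := b); rewrite ?ea // eq_sym.
case: ifP => [s1|s1].
  by have [] := bs_base (D := D) (i := i) (a := a) (b := b); rewrite ?ea // eq_sym.
have s2 : 1 < size D by rewrite ltnNge s1.
have eD : D = take (size D %/ 2) D ++ drop (size D %/ 2) D by rewrite cat_take_drop.
rewrite /orc1 /=.
set D1 := take _ D; set D2 := drop _ D; set mid := mixo D1 a b.
have sz1 : size D1 <= 2 ^ fuel.
  rewrite size_take; case: ifP => [_|/negbT h]; first by apply: half1; rewrite -expnS.
  by move: h; rewrite ltn_Pdiv // (ltnW s2).
have sz2 : size D2 <= 2 ^ fuel by rewrite size_drop; apply: half2; rewrite -expnS.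
have ag1 : forall l, l \notin D1 -> a l = mid l.
  by move=> l lD; rewrite /mid ffunE (negbTE lD).
have ag2 : forall l, l \notin D2 -> mid l = b l.
  move=> l lD; rewrite /mid ffunE; case: ifP => // lD1.
  by apply: ag; rewrite eD mem_cat lD1.
case: ifP => [ne|/negbFE/eqP e].
  have [h1 h2 h3] := IH a mid D1 fa ea ne ag1 sz1.
  by split => //; rewrite eD mem_cat h2.
have eb' : cpt N i b != cpt N i mid by rewrite e.
have [h1 h2 h3] := IH mid b D2 (cpt N i mid) erefl eb' ag2 sz2.
by split => //; rewrite eD mem_cat h2 orbT.
Qed.

Lemma S0_univ : universal k S0.
Proof.
rewrite /S0; case: arg_minnP => //.
apply/forallP => K; apply/implyP => _; apply/forallP => v; apply/existsP; exists v.
by rewrite inE /=; apply/forallP => x; apply/implyP.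
Qed.

Lemma pad_set (T : finType) d (A : {set T}) : #|A| + d <= #|T| ->
  exists B : {set T}, A \subset B /\ #|B| = #|A| + d.
Proof.
elim: d A => [|d IH] A h; first by exists A; rewrite addn0.
have : 0 < #|~: A| by move: h (cardsC A); lia.
case/card_gt0P => x; rewrite inE => xA.
have h' : #|x |: A| + d <= #|T| by rewrite cardsU1 xA; move: h; lia.
have [B [AB cB]] := IH (x |: A) h'.
exists B; split; first by apply: subset_trans AB; apply: subsetUr.
by rewrite cB cardsU1 xA; lia.
Qed.

Lemma univ_match i (o : out) : k <= n.-1 -> i \notin pa N i -> #|pa N i| <= k ->
  exists2 s, s \in S0 & forall l, l \in pa N i -> emb i s l = o l.
Proof.
move=> kn ipa pak.
set K' := [set l' : 'I_n.-1 | lift i l' \in pa N i].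
have cK' : #|K'| <= k.
  apply: leq_trans pak.
  rewrite -(card_imset K' (@lift_inj _ i)); apply: subset_leq_card.
  by apply/subsetP => x /imsetP[y]; rewrite inE => yp ->.
have hK : #|K'| + (k - #|K'|) <= #|'I_n.-1| by rewrite card_ord; lia.
have [K [KK cK]] := pad_set hK.
have := S0_univ; move/forallP/(_ K); rewrite cK subnKC // eqxx /=.
move/forallP/(_ [ffun l' => o (lift i l')])/existsP => -[s /andP[sS /forallP hs]].
exists s => // l lpa; rewrite /emb ffunE.
case: unliftP => [l' e|e]; last by move: lpa; rewrite e (negbTE ipa).
have lK : l' \in K by apply: (subsetP KK); rewrite inE -e.

by move: (hs l'); rewrite lK ffunE e => /eqP.
Qed.

Lemma card_zP (P : {set 'I_n}) : #|[set zP P o | o : out]| <= 2 ^ #|P|.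
Proof.
have -> : 2 ^ #|P| = #|pffun_on false P (@predT bool)| by rewrite card_pffun_on card_bool.
apply: subset_leq_card; apply/subsetP => f /imsetP[o _ ->].
apply/pffun_onP; split => //.
apply/subsetP => l; rewrite inE /zP ffunE; by case: (l \in P).
Qed.

Lemma zP_in (P : {set 'I_n}) o : zP P o \in enum [set zP P o | o : out].
Proof. by rewrite mem_enum; apply: imset_f. Qed.

Lemma rounds_spec i t0 fuel (P : {set 'I_n}) :
  k <= n.-1 ->
  (forall s, s \in S0 -> t0 (emb i s) = cpt N i (emb i s)) ->
  P \subset pa N i -> #|pa N i| < fuel + #|P| ->
  (forall o, (runM orc1 (rounds i t0 fuel P)).1 o = cpt N i o) /\
  (runM orc1 (rounds i t0 fuel P)).2 + 2 ^ #|P| <=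
     2 ^ (#|pa N i|).+1 + (#|pa N i| - #|P|) * L0.
Proof.
move=> kn ht0.
have ipa : i \notin pa N i by case: HN => _ Hs _ _ _; apply: Hs.
have pak : #|pa N i| <= k by case: HN => _ _ _ _ Hk; apply: Hk.
elim: fuel P => [|fuel IH] P sub lt.
  by move: (subset_leq_card sub) lt; rewrite add0n; lia.
rewrite /= runM_bind.
have [E1 E2] := evalList_spec i (enum [set zP P o | o : out]).
move: E1 E2.
set T := (runM orc1 (evalList i _)).1 => E1 E2.
have cP := card_zP P.
rewrite cardE in cP.
have cPp : #|P| <= #|pa N i| by apply: subset_leq_card.
case: pickP => [s /andP[sS ne] | none].
- set a := zP P (emb i s); set b := emb i s.
  have ea : cpt N i a = T a by rewrite E2 // zP_in.
  have eb : cpt N i b != T a by rewrite -ht0.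
  have ag : forall l, l \notin enum (~: P) -> a l = b l.
    by move=> l; rewrite mem_enum inE negbK /a /zP ffunE => ->.
  have sz : size (enum (~: P)) <= 2 ^ L0.
    rewrite -cardE; apply: leq_trans (ltnW (trunc_log_ltn _ _)) => //.
    by apply: leq_trans (max_card _) _; rewrite card_ord.
  have [j1 j2 j3] := bsearch_spec ea eb ag sz.
  rewrite runM_bind /=.
  move: j1 j2 j3; set j := (runM orc1 _).1 => j1 j2 j3.
  have jP : j \notin P by move: j2; rewrite mem_enum inE.
  have sub' : j |: P \subset pa N i by rewrite subUset sub1set j1 sub.
  have lt' : #|pa N i| < fuel + #|j |: P| by rewrite cardsU1 jP add1n addnS -addSn.
  have [IH1 IH2] := IH _ sub' lt'.
  split => //.
  have cP' : #|j |: P| <= #|pa N i| by apply: subset_leq_card.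
  rewrite cardsU1 jP add1n in IH2 cP'.
  rewrite E1; exact: ar2 cP j3 cP' IH2.
- have paP : pa N i \subset P.
    apply/subsetP => j jpa; apply/negPn/negP => jP.
    have [o1 [o2 [ag ne]]] : exists o o' : outcome n,
        (forall l, l != j -> o l = o' l) /\ cpt N i o != cpt N i o'.
      by case: HN => _ _ Hnd _ _; apply: Hnd.
    have zeq : zP P o1 = zP P o2.
      apply/ffunP => l; rewrite !ffunE; case: ifP => // lP; apply: ag.
      by apply/eqP => e; rewrite -e lP in jP.
    have [o ho] : exists o, cpt N i o != cpt N i (zP P o).
      case: (eqVneq (cpt N i o1) (cpt N i (zP P o1))) => e1; last by exists o1.
      by exists o2; rewrite -zeq -e1 eq_sym.
    have [s sS hs] := univ_match o kn ipa pak.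
    move: (none s); rewrite sS /= ht0 // E2 ?zP_in //.
    have -> : cpt N i (emb i s) = cpt N i o by apply: (loc_eq HN).
    have -> : cpt N i (zP P (emb i s)) = cpt N i (zP P o).
      by apply: (loc_eq HN) => l lpa; move: (hs l lpa); rewrite !ffunE => ->.
    by rewrite (negbTE ho).
  split.
    move=> o /=; rewrite E2 ?zP_in //; apply: (loc_eq HN) => l lpa.
    by rewrite ffunE (subsetP paP).
  rewrite /= addn0 E1; apply: leq_trans (leq_addr _ _).
  by rewrite expnS; apply: ar1 cP _; rewrite leq_exp2l.
Qed.

Lemma learn1_spec i : k <= n.-1 ->
  (forall o, (runM orc1 (learn1 i)).1 o = cpt N i o) /\
  (runM orc1 (learn1 i)).2 <= (Uk n k + 2 * 2 ^ k) + #|pa N i| * L0.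
Proof.
move=> kn; rewrite /learn1 runM_bind.
have [E1 E2] := evalList_spec i [seq emb i s | s <- enum S0].
move: E1 E2; set t0 := (runM orc1 _).1 => E1 E2.
have ht0 : forall s, s \in S0 -> t0 (emb i s) = cpt N i (emb i s).
  by move=> s sS; apply: E2; apply: map_f; rewrite mem_enum.
have pak : #|pa N i| <= k by case: HN => _ _ _ _ Hk; apply: Hk.
have lt0 : #|pa N i| < k.+1 + #|(set0 : {set 'I_n})| by rewrite cards0 addn0 ltnS.
have [R1 R2] := rounds_spec kn ht0 (sub0set _) lt0.
split => //=.
rewrite E1 size_map -cardE; move: R2; rewrite cards0 subn0.
have : 2 ^ #|pa N i| <= 2 ^ k by rewrite leq_exp2l.
rewrite /Uk -/S0; apply: ar3.
Qed.

Lemma learnAll_spec vs : k <= n.-1 ->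
  (forall i, i \in vs -> forall o, (runM orc1 (learnAll vs)).1 i o = cpt N i o) /\
  (runM orc1 (learnAll vs)).2 <= size vs * (Uk n k + 2 * 2 ^ k) +
                                 (\sum_(i <- vs) #|pa N i|) * L0.
Proof.
move=> kn; elim: vs => [|i vs [IH1 IH2]] //=.
have [L1 L2] := learn1_spec i kn.
rewrite big_cons [runM orc1 (bindM (learn1 i) _)]runM_bind.
move: L1 L2.
set g := (runM orc1 (learn1 i)).1; set c1 := (runM orc1 (learn1 i)).2 => L1 L2.
rewrite runM_bind /=.
split.
  move=> j; rewrite inE; case: (eqVneq j i) => [->|ji] /=; first by move=> _ o; exact: L1.
  by move=> jv o; apply: IH1.
rewrite addn0; exact: ar4 L2 IH2.
Qed.

End Learn.


Lemma count_card (T : finType) (p : pred T) : count p (enum T) = #|[set x | p x]|.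
Proof.
rewrite cardE /enum_mem size_filter -enumT count_filter.
by apply: eq_count => x; rewrite /= !inE andbT.
Qed.

Section Robust.
Variables (n : nat) (Xs : {set swap n}).
Hypothesis HX : valid_Xswap Xs.
Local Notation out := (outcome n).

Definition lo (i : 'I_n) (q : out) (b : bool) : out := [ffun l => if l == i then b else q l].
Definition sw i q : swap n :=
  if (lo i q false, lo i q true) \in Xs then (lo i q false, lo i q true)
  else (lo i q true, lo i q false).
Definition flipo (j : 'I_n) (q : out) : out := [ffun l => if l == j then ~~ q l else q l].
Definition xq i q j := sw i (flipo j q).

Lemma sw_off i q l : l != i -> (sw i q).1 l = q l /\ (sw i q).2 l = q l.
Proof. by move=> li; rewrite /sw; case: ifP => _ /=; rewrite !ffunE (negbTE li). Qed.

Lemma sw_at i q : (sw i q).1 i != (sw i q).2 i.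
Proof. by rewrite /sw; case: ifP => _ /=; rewrite !ffunE eqxx. Qed.

Lemma sw_diffset i q : diffset (sw i q).1 (sw i q).2 = [set i].
Proof.
apply/setP => l; rewrite !inE; case: (eqVneq l i) => [->|li]; first exact: sw_at.
by have [-> ->] := sw_off q li; rewrite eqxx.
Qed.

Lemma sw_in i q : sw i q \in Xs.
Proof.
case: HX => _ H.
have hs : is_swap (lo i q false, lo i q true).
  rewrite /is_swap.
  have -> : diffset (lo i q false, lo i q true).1 (lo i q false, lo i q true).2 = [set i].
    apply/setP => l; rewrite /diffset !inE !ffunE; by case: eqP; case: eqP => //= -> //; case: eqP.
  by rewrite cards1.
have := H _ _ hs; rewrite /sw; case: ifP => //= _.
by case: ((lo i q true, lo i q false) \in Xs).
Qed.

Lemma xq_inj i q : {in [set j | j != i] &, injective (xq i q)}.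
Proof.
move=> j1 j2; rewrite !inE => j1i j2i e; case: (eqVneq j1 j2) => // ne; exfalso.
have := congr1 (fun x : swap n => x.1 j1) e => /=.
have [-> _] := sw_off (flipo j1 q) j1i; have [-> _] := sw_off (flipo j2 q) j1i.
by rewrite !ffunE eqxx (negbTE ne); case: (q j1).
Qed.

Lemma xq_F1 i q j : j != i -> xq i q j \in F1 Xs (xq i q i).
Proof.
move=> ji; rewrite inE sw_in /= !sw_diffset eqxx /=.
have -> : [set l | (l \notin [set i]) && ((xq i q j).1 l != (xq i q i).1 l)] = [set j].
  apply/setP => l; rewrite !inE; case: (eqVneq l i) => [->|li] /=.
    by rewrite eq_sym (negbTE ji).
  have [-> _] := sw_off (flipo j q) li; have [-> _] := sw_off (flipo i q) li.
  rewrite !ffunE (negbTE li); case: (eqVneq l j) => //= _.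
    by case: (q l).
  by rewrite eqxx.
by apply/eqP; apply: cards1.
Qed.

Lemma L_count i q (L : {set swap n}) :
  #|[set j | xq i q j \in L]| <= 1 + #|F1 Xs (xq i q i) :&: L|.
Proof.
set A := [set j | (j != i) && (xq i q j \in L)].
have h1 : #|[set j | xq i q j \in L]| <= 1 + #|A|.
  apply: leq_trans (_ : #|i |: A| <= _); last by rewrite cardsU1; case: (i \notin A).
  apply: subset_leq_card; apply/subsetP => j; rewrite !inE.
  by case: (eqVneq j i).
apply: leq_trans h1 _; rewrite leq_add2l.
have inj : {in A &, injective (xq i q)}.
  move=> j1 j2; rewrite !inE => /andP[j1i _] /andP[j2i _]; apply: xq_inj; by rewrite inE.
rewrite -(card_in_imset inj); apply: subset_leq_card.
apply/subsetP => x /imsetP[j]; rewrite inE => /andP[ji jL] ->.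
by rewrite inE jL xq_F1.
Qed.

Variables (A : Type) (dec : A -> option bool).

Fixpoint askAll (qs : seq (swap n)) : M (swap n) A (seq (swap n * A)) :=
  match qs with
  | [::] => Ret [::]
  | x :: qs' => Qry x (fun a => bindM (askAll qs') (fun r => Ret ((x, a) :: r)))
  end.

Lemma askAll_spec (orc : swap n -> A) qs :
  runM orc (askAll qs) = ([seq (x, orc x) | x <- qs], size qs) /\
  okM (fun x => x \in Xs) orc (askAll qs) = all (fun x => x \in Xs) qs.
Proof.
elim: qs => [|x qs [IH1 IH2]] //=.
by rewrite runM_bind okM_bind IH1 IH2 /= addn0 andbT.
Qed.

Definition vote i (x : swap n) (a : A) : option bool := omap (fun c => x.1 i == c) (dec a).

Definition ev i q : M (swap n) A bool :=
  bindM (askAll [seq xq i q j | j <- enum 'I_n]) (fun r =>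
    let vs := [seq vote i xa.1 xa.2 | xa <- r] in
    Ret (count (pred1 (Some false)) vs < count (pred1 (Some true)) vs)).

Lemma ev_spec (orc : swap n -> A) i q (c : bool) :
  let W := fun j => vote i (xq i q j) (orc (xq i q j)) in
  #|[set j | W j == Some (~~ c)]| < #|[set j | W j == Some c]| ->
  [/\ (runM orc (ev i q)).1 = c, (runM orc (ev i q)).2 = n &
      okM (fun x => x \in Xs) orc (ev i q)].
Proof.
move=> W h.
have [E1 E2] := askAll_spec orc [seq xq i q j | j <- enum 'I_n].
rewrite /ev runM_bind okM_bind E1 E2 /= addn0 size_map size_enum_ord andbT.
split => //; last by apply/allP => x /mapP[j _ ->]; exact: sw_in.
rewrite -!map_comp !count_map.
have e : forall v (p : pred 'I_n), p =1 (fun j => W j == v) ->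
    count p (Finite.enum 'I_n) = #|[set j | W j == v]|.
  by move=> v p hp; rewrite -enumT (eq_count hp) count_card.
rewrite (e (Some false)); last by move=> j.
rewrite (e (Some true)); last by move=> j.
 move: h; case: c => /= h; first by rewrite h.
by apply/negbTE; rewrite -leqNgt ltnW.
Qed.

End Robust.


Lemma arF n U e E t c : e <= U -> 1 <= t ->
  c <= n * (n * (U + 2 * e) + E * t.+1) -> c <= 3 * (n ^ 2 * U + E * n * t).
Proof. move=> h1 h2 h3; apply: leq_trans h3 _; nia. Qed.

Lemma ar5 a b n r : a + b = n -> a <= r -> n <= r + b. Proof. lia. Qed.

Lemma arL wr p k ri b n : wr <= p -> p <= k -> n <= ri + (p + b) ->
  b <= 1 + (n - 2 - 2 * k) -> 2 * k + 2 < n -> wr < ri.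
Proof. lia. Qed.

Lemma arM wr p k ri b n : wr <= p + b -> p <= k ->
  b <= 1 + ((n - 1) %/ 2 - k - 1) -> 2 * k + 2 < n -> wr + ri = n -> wr < ri.
Proof. lia. Qed.

Lemma pow_le_Uk n k : k <= n.-1 -> 2 ^ k <= Uk n k.
Proof.
move=> kn.
have h0 : #|(set0 : {set 'I_n.-1})| + k <= #|'I_n.-1| by rewrite cards0 card_ord.
have [K [_ cK]] := pad_set h0; rewrite cards0 add0n in cK.
set phi := fun s : {ffun 'I_n.-1 -> bool} => [ffun l => if l \in K then s l else false].
have -> : 2 ^ k = #|pffun_on false K (@predT bool)| by rewrite card_pffun_on card_bool cK.
apply: leq_trans (_ : #|phi @: S0 n k| <= _); last exact: leq_imset_card.
apply: subset_leq_card; apply/subsetP => f /pffun_onP [sup _].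
have := S0_univ n k; move/forallP/(_ K); rewrite cK eqxx /=.
move/forallP/(_ f)/existsP => -[s /andP[sS /forallP hs]].
apply/imsetP; exists s => //; apply/ffunP => l; rewrite /phi ffunE.
case: ifP => lK; first by move: (hs l); rewrite lK => /eqP.
apply/negbTE/negP => fl.
by have := subsetP sup l; rewrite inE fl lK => /(_ isT).
Qed.

Definition hyp n (G : 'I_n -> outcome n -> bool) (x : swap n) : bool :=
  if [pick j in diffset x.1 x.2] is Some j then x.1 j == G j x.2 else false.

Definition prog n k (Xs : {set swap n}) A (dec : A -> option bool) : M (swap n) A (swap n -> bool) :=
  bindM (substM (fun iq : 'I_n * outcome n => ev Xs dec iq.1 iq.2) (@learnAll n k (enum 'I_n)))
        (fun G => Ret (hyp G)).

Section Final.
Variables (n k : nat) (Xs : {set swap n}) (N : cpnet n).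
Hypotheses (HX : valid_Xswap Xs) (HN : in_class k N) (Hnk : 2 * k + 2 < n).

Lemma truth i q : cstar N (sw Xs i q) = ((sw Xs i q).1 i == cpt N i q).
Proof.
rewrite /cstar (cstar_swap HN (j := i)).
- congr (_ == _); apply: (loc_eq HN) => l lpa.
  have li : l != i by apply/eqP => e; case: HN => _ Hs _ _ _; move: (Hs i); rewrite -{1}e lpa.
  by have [_ ->] := sw_off Xs q li.
- by move=> l li; have [-> ->] := sw_off Xs q li.
- exact: sw_at.
Qed.

Lemma nb_truth i q j : j \notin pa N i -> cpt N i (flipo j q) = cpt N i q.
Proof.
move=> jpa; apply: (loc_eq HN) => l lpa; rewrite ffunE.
case: (eqVneq l j) => [e|] //; by move: lpa; rewrite e (negbTE jpa).
Qed.

Lemma bool3 b t : (b == (b == t)) = t. Proof. by case: b; case: t. Qed.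
Lemma bool4 b t : (b == ~~ (b == t)) = ~~ t. Proof. by case: b; case: t. Qed.

Lemma cardU_le (T : finType) (A B : {set T}) : #|A :|: B| <= #|A| + #|B|.
Proof. rewrite cardsU; exact: leq_subr. Qed.

Lemma ev_limited L i q :
  (forall x, x \in Xs -> #|F1 Xs x :&: L| <= n - 2 - 2 * k) ->
  [/\ (runM (limited_oracle N L) (ev Xs id i q)).1 = cpt N i q,
      (runM (limited_oracle N L) (ev Xs id i q)).2 <= n &
      okM (fun x => x \in Xs) (limited_oracle N L) (ev Xs id i q)].
Proof.
move=> HL.
set c := cpt N i q.
have pak : #|pa N i| <= k by case: HN => _ _ _ _ Hk; apply: Hk.
set W := fun j => vote id i (xq Xs i q j) (limited_oracle N L (xq Xs i q j)).
have eW : forall j, W j = if xq Xs i q j \in L then None else Some (cpt N i (flipo j q)).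
  move=> j; rewrite /W /vote /limited_oracle; case: ifP => //= _.
  by rewrite truth bool3.
have wr : #|[set j | W j == Some (~~ c)]| <= #|pa N i|.
  apply: subset_leq_card; apply/subsetP => j; rewrite inE eW.
  case: ifP => // _ /eqP [] e; apply/negPn/negP => jpa.
  by move: e; rewrite nb_truth // /c; case: (cpt N i q).
set B := [set j | xq Xs i q j \in L].
have hb : #|B| <= 1 + (n - 2 - 2 * k).
  apply: leq_trans (L_count HX i q L) _; rewrite leq_add2l; apply: HL; exact: sw_in.
have ri : n <= #|[set j | W j == Some c]| + (#|pa N i| + #|B|).
  apply: leq_trans (leq_add (leqnn _) (cardU_le (pa N i) B)).
  have e : #|~: (pa N i :|: B)| + #|pa N i :|: B| = n by rewrite addnC cardsC card_ord.
  apply: (ar5 e); apply: subset_leq_card; apply/subsetP => j.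
  rewrite !inE negb_or eW => /andP[jpa jB]; rewrite (negbTE jB).
  by rewrite nb_truth.
have [h1 h2 h3] := ev_spec HX (dec := id) (orc := limited_oracle N L) (i := i) (q := q)
   (arL wr pak ri hb Hnk).
by rewrite h2.
Qed.

Lemma ev_malicious L i q :
  (forall x, x \in Xs -> #|F1 Xs x :&: L| <= (n - 1) %/ 2 - k - 1) ->
  [/\ (runM (malicious_oracle N L) (ev Xs (@Some bool) i q)).1 = cpt N i q,
      (runM (malicious_oracle N L) (ev Xs (@Some bool) i q)).2 <= n &
      okM (fun x => x \in Xs) (malicious_oracle N L) (ev Xs (@Some bool) i q)].
Proof.
move=> HL.
set c := cpt N i q.
have pak : #|pa N i| <= k by case: HN => _ _ _ _ Hk; apply: Hk.
set W := fun j => vote (@Some bool) i (xq Xs i q j) (malicious_oracle N L (xq Xs i q j)).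
have eW : forall j, W j = Some (if xq Xs i q j \in L then ~~ cpt N i (flipo j q)
                               else cpt N i (flipo j q)).
  move=> j; rewrite /W /vote /malicious_oracle; case: ifP => //= _.
    by rewrite truth bool4.
  by rewrite truth bool3.
set B := [set j | xq Xs i q j \in L].
have wr : #|[set j | W j == Some (~~ c)]| <= #|pa N i| + #|B|.
  apply: leq_trans (cardU_le _ _); apply: subset_leq_card; apply/subsetP => j.
  rewrite !inE eW; case: ifP => jL; rewrite ?orbT // orbF => /eqP [] e.
  apply/negPn/negP => jpa.
  by move: e; rewrite nb_truth // /c; case: (cpt N i q).
have hb : #|B| <= 1 + ((n - 1) %/ 2 - k - 1).
  apply: leq_trans (L_count HX i q L) _; rewrite leq_add2l; apply: HL; exact: sw_in.
have sum : #|[set j | W j == Some (~~ c)]| + #|[set j | W j == Some c]| = n.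
  transitivity #|'I_n|; last exact: card_ord.
  rewrite -(cardsC [set j | W j == Some (~~ c)]); congr (_ + _).
  apply: eq_card => j; rewrite !inE eW.
  by case: (if _ then _ else _); case: (c).
have [h1 h2 h3] := ev_spec HX (dec := @Some bool) (orc := malicious_oracle N L)
   (i := i) (q := q) (arM wr pak hb Hnk sum).
by rewrite h2.
Qed.

Lemma hyp_ok G : (forall j o, G j o = cpt N j o) ->
  forall x, x \in Xs -> hyp G x = cstar N x.
Proof.
move=> HG x xin.
have := (HX.1 x xin); rewrite /is_swap => /cards1P [d ed].
rewrite /hyp; case: pickP => [j jin | none]; last first.
  by move: (none d); rewrite ed inE eqxx.
rewrite HG /cstar (cstar_swap HN (j := j)) //; last by move: jin; rewrite inE.
move=> l lj; apply/eqP; apply/negPn/negP => dl.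
have : l \in diffset x.1 x.2 by rewrite inE.
have : j \in diffset x.1 x.2 by [].
rewrite ed !inE => /eqP ej /eqP el.
by move: lj; rewrite ej el eqxx.
Qed.

Lemma prog_learns A (dec : A -> option bool) (orc : swap n -> A) :
  (forall i q, [/\ (runM orc (ev Xs dec i q)).1 = cpt N i q,
      (runM orc (ev Xs dec i q)).2 <= n &
      okM (fun x => x \in Xs) orc (ev Xs dec i q)]) ->
  learns Xs orc N (toQ (prog k Xs dec))
       (3 * (n ^ 2 * Uk n k + edges N * n * trunc_log 2 n)).
Proof.
move=> Hev.
have kn : k <= n.-1 by lia.
have [S1 S2 S3] := runM_subst (orc1 := orc1 N) (orc2 := orc)
   (g := fun iq : 'I_n * outcome n => ev Xs dec iq.1 iq.2) (c := n)
   (P := fun x => x \in Xs) (@learnAll n k (enum 'I_n)) (fun q => Hev q.1 q.2).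
have [G1 G2] := learnAll_spec HN (enum 'I_n) kn.
exists (runM orc (prog k Xs dec)).1, (runM orc (prog k Xs dec)).2.
split; [|split].
- rewrite run_toQ; first by case: (runM orc (prog k Xs dec)).
  by rewrite /prog okM_bind S3.
- rewrite /prog runM_bind /= => x xin; apply: hyp_ok => // j o.
  by rewrite S1; apply: G1; rewrite mem_enum.
- rewrite /prog runM_bind /= addn0.
  apply: (arF (e := 2 ^ k)); first exact: pow_le_Uk.
    by rewrite trunc_log_gt0; apply/andP; split => //; lia.
  apply: leq_trans S2 _; rewrite leq_mul2l; apply/orP; right.
  move: G2; rewrite size_enum_ord big_enum /= /L0 /edges.
  have -> : \sum_(i in 'I_n) #|pa N i| = \sum_(i < n) #|pa N i| by [].
  by [].
Qed.

End Final.

Theorem corollary3 :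
  exists C : nat, forall n k : nat, 2 * k + 2 < n ->
  forall Xs : {set swap n}, valid_Xswap Xs ->
  (exists t : qtree (swap n) (option bool),
     forall (N : cpnet n), in_class k N ->
     forall L : {set swap n}, L \subset Xs ->
     (forall x, x \in Xs -> #|F1 Xs x :&: L| <= n - 2 - 2 * k) ->
     learns Xs (limited_oracle N L) N t
       (C * (n ^ 2 * Uk n k + edges N * n * trunc_log 2 n)))
  /\
  (exists t : qtree (swap n) bool,
     forall (N : cpnet n), in_class k N ->
     forall L : {set swap n}, L \subset Xs ->
     (forall x, x \in Xs -> #|F1 Xs x :&: L| <= (n - 1) %/ 2 - k - 1) ->
     learns Xs (malicious_oracle N L) N t
       (C * (n ^ 2 * Uk n k + edges N * n * trunc_log 2 n))).
Proof.
exists 3 => n k Hnk Xs HX; split.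
- exists (toQ (prog k Xs (@id (option bool)))) => N HN L _ HL.
  apply: (prog_learns HX HN Hnk) => i q; exact: (ev_limited HX HN Hnk).
- exists (toQ (prog k Xs (@Some bool))) => N HN L _ HL.
  apply: (prog_learns HX HN Hnk) => i q; exact: (ev_malicious HX HN Hnk).
Qed.
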